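(* For all $x\in[0,\infty)$, $$0\le\lim_{k\to\infty}\frac{x\,\mathcal{S}_{k+1}(x)}{\mathcal{S}_k(x)}\le 2,$$ where $\mathcal{S}_k(x)={}_2F_1\!\left(\frac{k}{2},\frac{k+1}{2};\frac{2k+1}{2};-x^2\right)$.
   Context: ${}_2F_1(a,b;c;z)$ denotes the Gauss hypergeometric function. *)

(* Defs.v *)
From Stdlib Require Import Reals.
From Coquelicot Require Import Coquelicot.
Open Scope R_scope.

Fixpoint poch (a : R) (n : nat) : R :=
  match n with
  | O => 1
  | S m => poch a m * (a + INR m)
  end.

Definition hyp2F1_series (a b c z : R) : R :=
  Series (fun n => poch a n * poch b n / (poch c n * INR (Factorial.fact n)) * z ^ n).

(* The Gauss hypergeometric function 2F1(a,b;c;z) on the real domain z < 1: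
   the power series for |z| < 1, and for z <= -1 its analytic continuation,
   given by the Pfaff transformation
     2F1(a,b;c;z) = (1-z)^(-a) 2F1(a, c-b; c; z/(z-1)),
   where z/(z-1) lies in [1/2, 1), inside the disc of convergence.
   (Values for z >= 1 are irrelevant and unspecified.) *)
Definition hyp2F1 (a b c z : R) : R :=
  if Rlt_dec (Rabs z) 1 then hyp2F1_series a b c z
  else Rpower (1 - z) (- a) * hyp2F1_series a (c - b) c (z / (z - 1)).

Definition Sk (k : nat) (x : R) : R :=
  hyp2F1 (INR k / 2) ((INR k + 1) / 2) ((2 * INR k + 1) / 2) (- x ^ 2).

(* Main.v *)
Require Import Defs.
From Stdlib Require Import Reals Lra Lia Psatz.
From Coquelicot Require Import Coquelicot.
Open Scope R_scope.

Lemma poch_S a n : poch a (S n) = poch a n * (a + INR n).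
Proof. reflexivity. Qed.

Lemma poch_shift a n : poch (a+1) n * a = poch a n * (a + INR n).
Proof.
  induction n as [|n IH].
  - simpl. ring.
  - rewrite !poch_S. rewrite S_INR.
    replace (poch (a + 1) n * (a + 1 + INR n) * a) with ((poch (a+1) n * a) * (a + 1 + INR n)) by ring.
    rewrite IH. ring.
Qed.

Lemma poch_Sl a n : poch a (S n) = a * poch (a+1) n.
Proof. rewrite poch_S, <- poch_shift. ring. Qed.

Lemma poch_pos a n : 0 < a -> 0 < poch a n.
Proof.
  intros Ha. induction n; simpl. lra.
  apply Rmult_lt_0_compat; auto. pose proof (pos_INR n). lra.
Qed.

Lemma poch_nonneg a n : 0 <= a -> 0 <= poch a n.
Proof.
  intros Ha. induction n; simpl. lra.
  apply Rmult_le_pos; auto. pose proof (pos_INR n). lra.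
Qed.

Lemma poch_arg a b n : a = b -> poch a n = poch b n.
Proof. intros ->; reflexivity. Qed.

Lemma fact_pos n : 0 < INR (Factorial.fact n).
Proof. apply lt_0_INR, Factorial.lt_O_fact. Qed.

Lemma fact_S n : INR (Factorial.fact (S n)) = (INR n + 1) * INR (Factorial.fact n).
Proof. rewrite fact_simpl, mult_INR, S_INR. ring. Qed.

Lemma poch_le a b n : 0 <= a <= b -> poch a n <= poch b n.
Proof.
  intros H. induction n; simpl. lra.
  pose proof (pos_INR n). apply Rmult_le_compat; try lra.
  apply poch_nonneg; lra.
Qed.

Lemma poch_one n : poch 1 n = INR (Factorial.fact n).
Proof.
  induction n. reflexivity.
  rewrite poch_S, fact_S, IHn. ring.
Qed.

Definition ee n := poch (1/2) n / INR (Factorial.fact n).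
Definition gg a n := poch a n * poch a n / (poch (2*a+1/2) n * INR (Factorial.fact n)).
Definition hh a n := poch (a+1/2) n * poch (a+1/2) n / (poch (2*a+1/2) n * INR (Factorial.fact n)).

Lemma ee_S n : ee (S n) = ee n * (1/2 + INR n) / (INR n + 1).
Proof.
  unfold ee. rewrite poch_S, fact_S. pose proof (fact_pos n). pose proof (pos_INR n).
  field. lra.
Qed.

Lemma gg_S a j : 0 <= a -> gg a (S j) = gg a j * ((a + INR j) * (a + INR j)) / ((2*a+1/2+INR j) * (INR j + 1)).
Proof.
  intros Ha. unfold gg. rewrite !poch_S, fact_S.
  pose proof (fact_pos j). pose proof (pos_INR j).
  assert (0 < poch (2*a+1/2) j) by (apply poch_pos; lra).
  field. repeat split; lra.
Qed.

Lemma hh_S a j : 0 <= a -> hh a (S j) = hh a j * ((a + 1/2 + INR j) * (a + 1/2 + INR j)) / ((2*a+1/2+INR j) * (INR j + 1)).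
Proof.
  intros Ha. unfold hh. rewrite !poch_S, fact_S.
  pose proof (fact_pos j). pose proof (pos_INR j).
  assert (0 < poch (2*a+1/2) j) by (apply poch_pos; lra).
  field. repeat split; lra.
Qed.

Lemma telescope_gen (T G : nat -> nat -> R) (A B : R) n :
  (forall m, (m <= n)%nat -> A * T (S n) m - B * T n m = G n (S m) - G n m) ->
  forall p, (p <= n)%nat ->
  A * sum_f_R0 (T (S n)) p - B * sum_f_R0 (T n) p = G n (S p) - G n 0%nat.
Proof.
  intros H p. induction p as [|p IH]; intros Hp.
  - simpl. apply H. lia.
  - rewrite !tech5. specialize (IH ltac:(lia)). specialize (H (S p) Hp).
    lra.
Qed.

Lemma wz (T G : nat -> nat -> R) (A B : R) n :
  (forall m, (m <= n)%nat -> A * T (S n) m - B * T n m = G n (S m) - G n m) ->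
  G n 0%nat = 0 -> G n (S n) = - A * T (S n) (S n) ->
  A * sum_f_R0 (T (S n)) (S n) = B * sum_f_R0 (T n) n.
Proof.
  intros H H0 H1. rewrite tech5.
  pose proof (telescope_gen T G A B n H n (le_n n)). lra.
Qed.

Lemma ee_coef n : sum_f_R0 (fun m => ee m * ee (n - m)) n = 1.
Proof.
  induction n as [|n IH].
  - simpl. unfold ee. simpl. field.
  - set (T := fun n m => ee m * ee (n - m)).
    set (G := fun n m => - INR m / (INR n + 1) * T (S n) m).
    assert (Hw := wz T G 1 1 n).
    change (sum_f_R0 (fun m => ee m * ee (S n - m)) (S n)) with (sum_f_R0 (T (S n)) (S n)).
    change (sum_f_R0 (fun m => ee m * ee (n - m)) n) with (sum_f_R0 (T n) n) in IH.
    rewrite IH in Hw. rewrite <- (Rmult_1_l (sum_f_R0 (T (S n)) (S n))).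
    rewrite Hw; [ring| | |].
    + intros m Hm. unfold G, T. cbv beta.
      replace (S n - m)%nat with (S (n - m)) by lia.
      replace (S n - S m)%nat with (n - m)%nat by lia.
      assert (Hn : INR n = INR m + INR (n - m)) by (rewrite <- plus_INR; f_equal; lia).
      pose proof (pos_INR m). pose proof (pos_INR (n-m)).
      rewrite Hn, !ee_S, S_INR. set (j := INR (n-m)) in *.
      field. repeat split; lra.
    + unfold G. simpl. field. pose proof (pos_INR n). lra.
    + unfold G. rewrite S_INR. field. pose proof (pos_INR n). lra.
Qed.

Lemma euler_coef a n : 0 <= a -> sum_f_R0 (fun m => ee m * gg a (n - m)) n = hh a n.
Proof.
  intros Ha. induction n as [|n IH].
  - simpl. unfold ee, gg, hh. simpl. field.
  - set (T := fun n m => ee m * gg a (n - m)).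
    set (G := fun n m => INR m * (INR m - 2 * INR n - 2*a - 3/2) * T (S n) m).
    set (A := (2*a+1/2+INR n)*(INR n + 1)).
    set (B := (a+1/2+INR n)*(a+1/2+INR n)).
    assert (Hw := wz T G A B n).
    change (sum_f_R0 (fun m => ee m * gg a (S n - m)) (S n)) with (sum_f_R0 (T (S n)) (S n)).
    change (sum_f_R0 (fun m => ee m * gg a (n - m)) n) with (sum_f_R0 (T n) n) in IH.
    rewrite IH in Hw.
    assert (HA : 0 < A) by (unfold A; pose proof (pos_INR n); nra).
    apply (Rmult_eq_reg_l A); [|lra].
    rewrite Hw; [| | |].
    + unfold A, B. rewrite hh_S by lra. field. pose proof (pos_INR n). lra.
    + intros m Hm. unfold G, T, A, B. cbv beta.
      replace (S n - m)%nat with (S (n - m)) by lia.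
      replace (S n - S m)%nat with (n - m)%nat by lia.
      assert (Hn : INR n = INR m + INR (n - m)) by (rewrite <- plus_INR; f_equal; lia).
      pose proof (pos_INR m). pose proof (pos_INR (n-m)).
      rewrite Hn, ee_S, gg_S, S_INR by lra. set (j := INR (n-m)) in *.
      field. repeat split; lra.
    + unfold G. simpl. ring.
    + unfold G, A. cbv beta. rewrite S_INR. unfold T. field.
Qed.

Definition bs K n := poch (K/2) n * poch ((K+1)/2) n / (poch ((2*K+1)/2) n * INR (Factorial.fact n)).

Lemma bs_rec K m : 1 <= K ->
  - K^2 * bs (K+1) m = (4*K^2-1) * (bs (K-1) (S m) - bs K (S m)).
Proof.
  intros HK. unfold bs.
  rewrite (poch_arg ((K+1+1)/2) (K/2+1)) by field.
  assert (E2 : poch ((2*(K+1)+1)/2) m = poch ((2*K+1)/2) m * ((2*K+1)/2 + INR m) / ((2*K+1)/2)).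
  { rewrite (poch_arg _ ((2*K+1)/2+1)) by field. rewrite <- poch_shift. field. lra. }
  rewrite E2.
  rewrite (poch_Sl ((K-1)/2)), (poch_arg ((K-1)/2+1) ((K+1)/2)) by field.
  rewrite (poch_arg ((K-1+1)/2) (K/2)) by field.
  rewrite (poch_Sl (K/2)).
  rewrite (poch_Sl ((2*(K-1)+1)/2)), (poch_arg ((2*(K-1)+1)/2+1) ((2*K+1)/2)) by field.
  rewrite (poch_S ((K+1)/2)), (poch_S ((2*K+1)/2)), fact_S.
  assert (0 < poch ((2*K+1)/2) m) by (apply poch_pos; lra).
  pose proof (fact_pos m). pose proof (pos_INR m).
  field. repeat split; lra.
Qed.

Lemma gh_rec K m : 1 <= K ->
  (4*K^2-1) * (hh ((K-1)/2) (S m) - gg (K/2) (S m)) = K^2 * hh ((K+1)/2) m.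
Proof.
  intros HK. unfold hh, gg.
  rewrite (poch_arg ((K-1)/2+1/2) (K/2)) by field.
  rewrite (poch_Sl (K/2)).
  rewrite (poch_arg (2*((K-1)/2)+1/2) ((2*K-1)/2)) by field.
  rewrite (poch_Sl ((2*K-1)/2)), (poch_arg ((2*K-1)/2+1) ((2*K+1)/2)) by field.
  rewrite (poch_arg (2*(K/2)+1/2) ((2*K+1)/2)) by field.
  rewrite (poch_S ((2*K+1)/2)).
  rewrite (poch_arg ((K+1)/2+1/2) (K/2+1)) by field.
  assert (E2 : poch (2*((K+1)/2)+1/2) m = poch ((2*K+1)/2) m * ((2*K+1)/2 + INR m) / ((2*K+1)/2)).
  { rewrite (poch_arg _ ((2*K+1)/2+1)) by field. rewrite <- poch_shift. field. lra. }
  rewrite E2, fact_S.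
  assert (0 < poch ((2*K+1)/2) m) by (apply poch_pos; lra).
  pose proof (fact_pos m). pose proof (pos_INR m).
  field. repeat split; lra.
Qed.

Lemma bs_nonneg K n : 0 <= K -> 0 <= bs K n.
Proof.
  intros HK. unfold bs.
  assert (0 < poch ((2*K+1)/2) n) by (apply poch_pos; lra).
  pose proof (fact_pos n).
  apply Rmult_le_pos. apply Rmult_le_pos; apply poch_nonneg; lra.
  apply Rlt_le, Rinv_0_lt_compat. nra.
Qed.

Lemma bs_step K n : 1 <= K -> bs (K+1) n <= 3 * bs K n.
Proof.
  intros HK.
  assert (Hb := bs_nonneg K n ltac:(lra)).
  assert (E : bs (K+1) n = bs K n * ((K/2 + INR n) * ((2*K+1)/2)) / ((K/2) * ((2*K+1)/2 + INR n))).
  { unfold bs.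
    rewrite (poch_arg ((K+1+1)/2) (K/2+1)) by field.
    rewrite (poch_arg ((2*(K+1)+1)/2) ((2*K+1)/2+1)) by field.
    assert (E1 : poch (K/2+1) n = poch (K/2) n * (K/2 + INR n) / (K/2)).
    { rewrite <- poch_shift. field. lra. }
    assert (E2 : poch ((2*K+1)/2+1) n = poch ((2*K+1)/2) n * ((2*K+1)/2 + INR n) / ((2*K+1)/2)).
    { rewrite <- poch_shift. field. lra. }
    rewrite E1, E2.
    assert (0 < poch ((2*K+1)/2) n) by (apply poch_pos; lra).
    pose proof (fact_pos n). pose proof (pos_INR n).
    field. repeat split; lra. }
  rewrite E. pose proof (pos_INR n).
  apply Rle_trans with (bs K n * 3).
  - unfold Rdiv. rewrite Rmult_assoc. apply Rmult_le_compat_l; auto.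
    apply (Rmult_le_reg_r ((K/2) * ((2*K+1)/2 + INR n))). nra.
    rewrite Rmult_assoc, Rinv_l by nra. nra.
  - lra.
Qed.

Lemma bs_1 n : bs 1 n <= 1.
Proof.
  unfold bs.
  rewrite (poch_arg ((1+1)/2) 1) by field. rewrite poch_one.
  rewrite (poch_arg ((2*1+1)/2) (3/2)) by field.
  assert (0 < poch (3/2) n) by (apply poch_pos; lra).
  assert (poch (1/2) n <= poch (3/2) n) by (apply poch_le; lra).
  assert (0 <= poch (1/2) n) by (apply poch_nonneg; lra).
  pose proof (fact_pos n).
  apply (Rmult_le_reg_r (poch (3/2) n * INR (Factorial.fact n))). nra.
  field_simplify; [nra|lra].
Qed.

Lemma bs_0 n : bs 0 n <= 1.
Proof.
  destruct n.
  - unfold bs. simpl. lra.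
  - unfold bs. rewrite poch_Sl. replace (0/2) with 0 by field.
    rewrite !Rmult_0_l. unfold Rdiv. rewrite Rmult_0_l. lra.
Qed.

Lemma bs_bound k n : bs (INR k) n <= 3 ^ k.
Proof.
  destruct k. simpl. apply bs_0.
  induction k.
  - simpl. pose proof (bs_1 n). lra.
  - rewrite S_INR. eapply Rle_trans. apply bs_step.
    rewrite S_INR. pose proof (pos_INR k). lra.
    simpl pow. simpl pow in IHk. lra.
Qed.

Lemma div_le_self u v : 0 <= u -> 1 <= v -> u / v <= u.
Proof.
  intros Hu Hv. unfold Rdiv.
  assert (/ v <= 1). { rewrite <- Rinv_1. apply Rinv_le_contravar; lra. }
  assert (0 < / v) by (apply Rinv_0_lt_compat; lra).
  nra.
Qed.

Lemma two_step_id tk t1 t2 T a a1 a2 :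
  0 < t1 -> 0 < t2 -> 0 < T ->
  tk = 1 + a1 / t1 -> t1 = 1 + a2 / t2 -> T * T = T + a ->
  tk - T = (a1 - a) / t1 - a * (a2 - a) / (t1 * t2 * T) + a * a / (t1 * t2 * (T * T)) * (t2 - T).
Proof.
  intros H1 H2 H3 Hk Ht HT.
  assert (Ha2 : a2 = (t1 - 1) * t2) by (rewrite Ht; field; lra).
  assert (Ha : a = T * T - T) by lra.
  subst tk a a2. field. repeat split; lra.
Qed.

Lemma two_step_bound tk t1 t2 T a a1 a2 :
  1 <= t1 -> 1 <= t2 -> 1 <= T -> 0 < a -> a <= a1 -> a <= a2 ->
  tk = 1 + a1 / t1 -> t1 = 1 + a2 / t2 -> T * T = T + a ->
  Rabs (tk - T) <= (a1 - a) + a / T * (a2 - a) + a * a / ((1 + a) * (T * T)) * Rabs (t2 - T).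
Proof.
  intros H1 H2 H3 Ha Ha1 Ha2 Hk Ht HT.
  rewrite (two_step_id tk t1 t2 T a a1 a2) by lra.
  assert (Hp : t1 * t2 = t2 + a2) by (rewrite Ht; field; lra).
  eapply Rle_trans. apply Rabs_triang.
  apply Rplus_le_compat.
  - eapply Rle_trans. unfold Rminus at 1. apply Rabs_triang.
    apply Rplus_le_compat.
    + rewrite Rabs_pos_eq. apply div_le_self; lra.
      apply Rmult_le_pos; [lra| apply Rlt_le, Rinv_0_lt_compat; lra].
    + rewrite Rabs_Ropp, Rabs_pos_eq.
      * replace (a * (a2 - a) / (t1 * t2 * T)) with ((a / T * (a2 - a)) / (t1 * t2)) by (field; lra).
        apply div_le_self. apply Rmult_le_pos; [apply Rmult_le_pos; [lra|apply Rlt_le, Rinv_0_lt_compat; lra]|lra]. nra.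
      * apply Rmult_le_pos; [nra| apply Rlt_le, Rinv_0_lt_compat; nra].
  - rewrite Rabs_mult, (Rabs_pos_eq (a * a / _)).
    + apply Rmult_le_compat_r. apply Rabs_pos.
      unfold Rdiv. apply Rmult_le_compat_l. nra.
      apply Rinv_le_contravar. nra. nra.
    + apply Rmult_le_pos; [nra| apply Rlt_le, Rinv_0_lt_compat; nra].
Qed.

Lemma conv_aux (e : nat -> R) (M th D : R) :
  0 <= th < 1 -> 0 <= D -> (forall k, Rabs (e k) <= M) ->
  (forall k, Rabs (e k) <= D / (INR k + 1) + th * Rabs (e (S (S k)))) ->
  forall eps, 0 < eps -> exists N, forall k, (N <= k)%nat -> Rabs (e k) <= eps.
Proof.
  intros Hth HD HM Hrec eps Heps.
  assert (HM0 : 0 <= M) by (specialize (HM 0%nat); pose proof (Rabs_pos (e 0%nat)); lra).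
  destruct (INR_archimed 1 (2 * D / (eps * (1 - th)))) as [N HN]; [lra|].
  rewrite Rmult_1_r in HN.
  assert (HdN : forall k, (N <= k)%nat -> D / (INR k + 1) <= eps * (1 - th) / 2).
  { intros k Hk. apply le_INR in Hk.
    assert (0 < eps * (1 - th)) by nra.
    apply (Rmult_le_reg_r (INR k + 1)). pose proof (pos_INR k); lra.
    unfold Rdiv at 1. rewrite Rmult_assoc, Rinv_l by (pose proof (pos_INR k); lra).
    rewrite Rmult_1_r.
    assert (2 * D / (eps * (1 - th)) * (eps * (1 - th)) = 2 * D) by (field; lra).
    nra. }
  assert (Hp : forall p k, (N <= k)%nat -> Rabs (e k) <= eps / 2 + th ^ p * M).
  { induction p as [|p IH]; intros k Hk.
    - simpl. specialize (HM k). lra.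
    - eapply Rle_trans. apply Hrec. specialize (HdN k Hk).
      specialize (IH (S (S k)) ltac:(lia)). simpl pow. nra. }
  destruct (pow_lt_1_zero th ltac:(rewrite Rabs_pos_eq; lra) (eps / (2 * (M + 1)))) as [p Hp'].
  { apply Rdiv_lt_0_compat; lra. }
  exists N. intros k Hk. specialize (Hp p k Hk). specialize (Hp' p (le_n p)).
  rewrite Rabs_pos_eq in Hp' by (apply pow_le; lra).
  assert (th ^ p * M <= eps / 2).
  { apply Rle_trans with (eps / (2 * (M + 1)) * M).
    apply Rmult_le_compat_r; lra.
    apply (Rmult_le_reg_r (2 * (M + 1))). lra.
    replace (eps / (2 * (M + 1)) * M * (2 * (M + 1))) with (eps * M) by (field; lra).
    nra. }
  lra.
Qed.

Lemma limit_lemma (x : R) (y : nat -> R) :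
  0 < x -> (forall k, 0 < y k) ->
  (forall k, (1 <= k)%nat -> x^2 * INR k ^ 2 * y (S k) = (4 * INR k ^ 2 - 1) * (y (k - 1)%nat - y k)) ->
  is_lim_seq (fun k => x * y (S k) / y k) (2 * x / (1 + sqrt (1 + x^2))).
Proof.
  intros Hx Hy Hrec.
  set (s := sqrt (1 + x^2)).
  assert (Hs2 : s * s = 1 + x^2) by (apply sqrt_sqrt; nra).
  assert (Hs1 : 1 <= s).
  { unfold s. apply Rle_trans with (sqrt 1); [rewrite sqrt_1; lra| apply sqrt_le_1_alt; nra]. }
  set (T := (1 + s) / 2). set (a := x^2 / 4).
  assert (HT : T * T = T + a) by (unfold T, a; replace (x^2) with (s*s - 1) by lra; field).
  assert (HT1 : 1 <= T) by (unfold T; lra).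
  assert (Ha : 0 < a) by (unfold a; nra).
  set (al := fun j : R => x^2 * j^2 / (4 * j^2 - 1)).
  set (t := fun k => y k / y (S k)).
  assert (Hal : forall j, 1 <= j -> a <= al j <= x^2 / 3 /\ al j - a <= x^2 / j).
  { intros j Hj. unfold al, a.
    assert (H4 : 0 < 4 * j^2 - 1) by nra.
    assert (Hd : x ^ 2 * j ^ 2 / (4 * j ^ 2 - 1) - x ^ 2 / 4 = x^2 / (4 * (4 * j^2 - 1))) by (field; lra).
    assert (Hd0 : 0 <= x^2 / (4 * (4 * j^2 - 1))) by (apply Rmult_le_pos; [nra| apply Rlt_le, Rinv_0_lt_compat; nra]).
    assert (Hd1 : x^2 / (4 * (4 * j^2 - 1)) <= x^2 / 12).
    { unfold Rdiv. apply Rmult_le_compat_l. nra. apply Rinv_le_contravar; nra. }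
    assert (Hd2 : x^2 / (4 * (4 * j^2 - 1)) <= x^2 / j).
    { unfold Rdiv. apply Rmult_le_compat_l. nra. apply Rinv_le_contravar; nra. }
    repeat split; lra. }
  assert (Ht : forall k, t k = 1 + al (INR k + 1) / t (S k)).
  { intros k. unfold t, al.
    specialize (Hrec (S k) ltac:(lia)).
    replace (S k - 1)%nat with k in Hrec by lia. rewrite S_INR in Hrec.
    pose proof (Hy k). pose proof (Hy (S k)). pose proof (Hy (S (S k))).
    pose proof (pos_INR k).
    assert (H4 : 0 < 4 * (INR k + 1)^2 - 1) by nra.
    replace (x ^ 2 * (INR k + 1) ^ 2 / (4 * (INR k + 1) ^ 2 - 1) / (y (S k) / y (S (S k))))
      with ((x^2 * (INR k+1)^2 * y (S (S k))) / ((4*(INR k+1)^2-1) * y (S k))) by (field; repeat split; lra).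
    rewrite Hrec. field. split; lra. }
  assert (Ht1 : forall k, 1 <= t k).
  { intros k. rewrite Ht. assert (0 < t (S k)) by (unfold t; apply Rdiv_lt_0_compat; auto).
    destruct (Hal (INR k + 1)) as [[H1 _] _]. pose proof (pos_INR k). lra.
    assert (0 <= al (INR k + 1) / t (S k)) by (apply Rmult_le_pos; [lra| apply Rlt_le, Rinv_0_lt_compat; lra]).
    lra. }
  assert (Ht2 : forall k, t k <= 1 + x^2/3).
  { intros k. rewrite Ht.
    destruct (Hal (INR k + 1)) as [[H1 H2] _]. pose proof (pos_INR k). lra.
    pose proof (div_le_self (al (INR k + 1)) (t (S k)) ltac:(lra) (Ht1 (S k))). lra. }
  set (e := fun k => t k - T).
  assert (Hconv := conv_aux e (1 + x^2/3 + T) (a * a / ((1 + a) * (T * T))) ((1 + a / T) * x^2)).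
  assert (Hth : 0 <= a * a / ((1 + a) * (T * T)) < 1).
  { split. apply Rmult_le_pos; [nra| apply Rlt_le, Rinv_0_lt_compat; nra].
    apply (Rmult_lt_reg_r ((1 + a) * (T * T))). nra.
    unfold Rdiv. rewrite Rmult_assoc, Rinv_l by nra. nra. }
  assert (HD : 0 <= (1 + a / T) * x^2).
  { apply Rmult_le_pos; [|nra]. assert (0 < a / T) by (apply Rdiv_lt_0_compat; lra). lra. }
  specialize (Hconv Hth HD).
  assert (HM : forall k, Rabs (e k) <= 1 + x^2/3 + T).
  { intros k. unfold e. specialize (Ht1 k). specialize (Ht2 k). unfold Rabs; destruct Rcase_abs; lra. }
  specialize (Hconv HM).
  assert (Hstep : forall k, Rabs (e k) <= (1 + a / T) * x^2 / (INR k + 1) + a * a / ((1 + a) * (T * T)) * Rabs (e (S (S k)))).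
  { intros k. unfold e.
    pose proof (pos_INR k).
    destruct (Hal (INR k + 1)) as [[H1 H2] H3]. lra.
    destruct (Hal (INR k + 1 + 1)) as [[H4 H5] H6]. lra.
    eapply Rle_trans.
    apply (two_step_bound (t k) (t (S k)) (t (S (S k))) T a (al (INR k + 1)) (al (INR k + 1 + 1))); auto.
    rewrite (Ht (S k)), S_INR. reflexivity.
    apply Rplus_le_compat_r.
    assert (H7 : x^2 / (INR k + 1 + 1) <= x^2 / (INR k + 1)).
    { unfold Rdiv. apply Rmult_le_compat_l. nra. apply Rinv_le_contravar; lra. }
    assert (H8 : 0 <= a / T) by (apply Rlt_le, Rdiv_lt_0_compat; lra).
    replace ((1 + a / T) * x ^ 2 / (INR k + 1)) with (x^2 / (INR k + 1) + a / T * (x^2 / (INR k + 1))) by (field; lra).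
    nra. }
  specialize (Hconv Hstep).
  replace (2 * x / (1 + s)) with (x / T) by (unfold T; field; lra).
  apply is_lim_seq_spec. intros eps.
  destruct (Hconv (eps / (2 * x))) as [N HN].
  { apply Rdiv_lt_0_compat. apply cond_pos. lra. }
  exists N. intros k Hk. specialize (HN k Hk).
  assert (Hyk := Hy k).
  replace (x * y (S k) / y k - x / T) with (x * (T - t k) / (t k * T)).
  2:{ unfold t. pose proof (Hy (S k)). field. repeat split; lra. }
  specialize (Ht1 k).
  unfold Rdiv. rewrite Rabs_mult, Rabs_mult, (Rabs_pos_eq x) by lra.
  rewrite Rabs_inv, (Rabs_pos_eq (t k * T)) by nra.
  assert (Hr : Rabs (T - t k) = Rabs (e k)) by (unfold e; rewrite <- Rabs_Ropp; f_equal; ring).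
  rewrite Hr.
  pose proof (cond_pos eps).
  assert (/ (t k * T) <= 1). { rewrite <- Rinv_1. apply Rinv_le_contravar; nra. }
  assert (0 < / (t k * T)) by (apply Rinv_0_lt_compat; nra).
  assert (x * (eps / (2 * x)) = eps / 2) by (field; lra).
  pose proof (Rabs_pos (e k)).
  assert (x * Rabs (e k) <= eps / 2) by (rewrite <- H2; apply Rmult_le_compat_l; lra). nra.
Qed.

Lemma abs_diff_ge u v : u * v <= 0 -> Rabs v <= Rabs (u - v).
Proof.
  intros H. unfold Rabs. repeat destruct Rcase_abs; nra.
Qed.

Lemma pos_lemma (x C : R) (y : nat -> R) :
  0 < x < 1 -> 0 < C -> 0 < y 0%nat ->
  (forall k, (1 <= k)%nat -> x^2 * INR k ^ 2 * y (S k) = (4 * INR k ^ 2 - 1) * (y (k - 1)%nat - y k)) ->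
  (forall k, Rabs (y k) <= C * 3 ^ k) ->
  forall k, 0 < y k.
Proof.
  intros Hx HC Hy0 Hrec Hb.
  set (q := 3 / x^2).
  assert (Hq : 3 < q).
  { unfold q. apply (Rmult_lt_reg_r (x^2)). nra.
    unfold Rdiv. rewrite Rmult_assoc, Rinv_l by nra. nra. }
  assert (Hr : forall j, (1 <= j)%nat -> exists b, q <= b /\ y (S j) = b * (y (j - 1)%nat - y j)).
  { intros j Hj. exists ((4 * INR j ^ 2 - 1) / (x^2 * INR j ^ 2)).
    assert (HJ : 1 <= INR j) by (apply (le_INR 1); lia).
    assert (HJ2 : 1 <= INR j ^ 2) by nra.
    assert (HxJ : 0 < x ^ 2 * INR j ^ 2) by (apply Rmult_lt_0_compat; nra).
    split.
    - unfold q.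
      assert (E : (4 * INR j ^ 2 - 1) / (x ^ 2 * INR j ^ 2) - 3 / x^2 = (INR j ^ 2 - 1) / (x ^ 2 * INR j ^ 2)) by (field; split; nra).
      assert (0 <= (INR j ^ 2 - 1) / (x ^ 2 * INR j ^ 2)) by (apply Rmult_le_pos; [lra| apply Rlt_le, Rinv_0_lt_compat; lra]).
      lra.
    - specialize (Hrec j Hj). apply (Rmult_eq_reg_l (x^2 * INR j ^ 2)). rewrite Hrec. field.
      split; lra. lra. }
  induction k as [|k IH]; auto.
  destruct (Rlt_le_dec 0 (y (S k))) as [Hp|Hn]; auto.
  exfalso.
  destruct (Hr (S k) ltac:(lia)) as [b0 [Hb0 Hy2]]. replace (S k - 1)%nat with k in Hy2 by lia.
  assert (Hpos2 : 0 < y (S (S k))) by (rewrite Hy2; nra).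
  assert (Hinv : forall p, y (S k + p)%nat * y (S (S k) + p)%nat <= 0 /\
                           q ^ p * Rabs (y (S (S k))) <= Rabs (y (S (S k) + p)%nat)).
  { induction p as [|p [IH1 IH2]].
    - rewrite !Nat.add_0_r. split. nra. simpl. lra.
    - destruct (Hr (S (S k) + p)%nat ltac:(lia)) as [b [Hbq Hyz]].
      replace (S (S k) + p - 1)%nat with (S k + p)%nat in Hyz by lia.
      replace (S k + S p)%nat with (S (S k) + p)%nat by lia.
      replace (S (S k) + S p)%nat with (S (S (S k) + p)) by lia.
      rewrite Hyz. split.
      + set (u := y (S k + p)%nat) in *. set (v := y (S (S k) + p)%nat) in *.
        assert (0 < b) by lra. nra.
      + rewrite Rabs_mult, (Rabs_pos_eq b) by lra.
        pose proof (abs_diff_ge _ _ IH1).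
        simpl pow. pose proof (Rabs_pos (y (S (S k) + p)%nat)).
        pose proof (Rabs_pos (y (S (S k)))). pose proof (pow_le q p ltac:(lra)).
        apply Rle_trans with (b * Rabs (y (S (S k) + p)%nat)).
        * apply Rle_trans with (q * Rabs (y (S (S k) + p)%nat)). 
          rewrite Rmult_assoc. apply Rmult_le_compat_l; lra.
          apply Rmult_le_compat_r; lra.
        * apply Rmult_le_compat_l; lra. }
  set (m := S (S k)) in *.
  set (Y := Rabs (y m)).
  assert (HY : 0 < Y) by (unfold Y; rewrite Rabs_pos_eq; lra).
  destruct (pow_lt_1_zero (x^2) ltac:(rewrite Rabs_pos_eq; nra) (Y / (C * 3 ^ m))) as [p Hp'].
  { apply Rdiv_lt_0_compat; auto. apply Rmult_lt_0_compat; auto. apply pow_lt; lra. }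
  specialize (Hp' p (le_n p)). rewrite Rabs_pos_eq in Hp' by (apply pow_le; nra).
  destruct (Hinv p) as [_ H2]. specialize (Hb (m + p)%nat).
  rewrite pow_add in Hb.
  assert (Hqp : q ^ p * (x^2) ^ p = 3 ^ p).
  { rewrite <- Rpow_mult_distr. f_equal. unfold q. field. lra. }
  assert (H3p : 0 < 3 ^ p) by (apply pow_lt; lra).
  assert (H3m : 0 < 3 ^ m) by (apply pow_lt; lra).
  assert (Hxp : 0 < (x^2) ^ p) by (apply pow_lt; nra).
  fold Y in H2. assert (Hc : q ^ p * Y <= C * (3 ^ m * 3 ^ p)) by lra.
  assert (Hc2 : 3 ^ p * Y <= C * 3 ^ m * 3 ^ p * (x^2)^p).
  { assert (E1 : 3 ^ p * Y = (q ^ p * Y) * (x^2)^p) by (rewrite <- Hqp; ring).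
    rewrite E1.
    replace (C * 3 ^ m * 3 ^ p * (x ^ 2) ^ p) with ((C * (3 ^ m * 3 ^ p)) * (x^2)^p) by ring.
    apply Rmult_le_compat_r; lra. }
  assert (Hc3 : C * 3 ^ m * (x^2)^p < Y).
  { apply (Rmult_lt_reg_r (/ (C * 3 ^ m))). apply Rinv_0_lt_compat. nra.
    replace (C * 3 ^ m * (x ^ 2) ^ p * / (C * 3 ^ m)) with ((x^2)^p) by (field; lra). exact Hp'. }
  nra.
Qed.

Lemma Series_zero (a : nat -> R) : (forall n, a n = 0) -> Series a = 0.
Proof.
  intros H. rewrite (Series_ext a (fun n => 0 * a n)).
  rewrite Series_scal_l. ring. intros n. rewrite H. ring.
Qed.

Lemma ratio_ex (u rho : nat -> R) (r : R) :
  (forall n, Rabs (u (S n)) <= rho n * Rabs (u n)) -> is_lim_seq rho r -> r < 1 ->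
  ex_series (fun n => Rabs (u n)).
Proof.
  intros Hu Hl Hr.
  apply is_lim_seq_spec in Hl.
  destruct (Hl (mkposreal ((1 - r)/2) ltac:(lra))) as [N HN]. simpl in HN.
  set (q := Rmax 0 ((1 + r)/2)).
  assert (Hq : 0 <= q < 1) by (unfold q; split; [apply Rmax_l| apply Rmax_lub_lt; lra]).
  assert (Hrho : forall n, (N <= n)%nat -> rho n <= q).
  { intros n Hn. specialize (HN n Hn). apply Rabs_def2 in HN.
    unfold q. eapply Rle_trans; [|apply Rmax_r]. lra. }
  assert (Hp : forall p, Rabs (u (N + p)%nat) <= Rabs (u N) * q ^ p).
  { induction p. rewrite Nat.add_0_r. simpl. lra.
    replace (N + S p)%nat with (S (N + p)) by lia.
    eapply Rle_trans. apply Hu.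
    specialize (Hrho (N + p)%nat ltac:(lia)).
    pose proof (Rabs_pos (u (N + p)%nat)). simpl pow.
    apply Rle_trans with (q * Rabs (u (N + p)%nat)). apply Rmult_le_compat_r; lra.
    pose proof (Rabs_pos (u N)). nra. }
  apply (ex_series_incr_n _ N).
  apply (@ex_series_le R_AbsRing R_CompleteNormedModule _ (fun p => Rabs (u N) * q ^ p)).
  - intros p. change (norm (Rabs (u (N + p)%nat))) with (Rabs (Rabs (u (N + p)%nat))).
    rewrite Rabs_Rabsolu. apply Hp.
  - apply (ex_series_scal_l (Rabs (u N)) (fun p => q ^ p)).
    apply ex_series_geom. rewrite Rabs_pos_eq; lra.
Qed.

Lemma lim_ratio al ga : 0 < ga -> is_lim_seq (fun n => (al + INR n) / (ga + INR n)) 1.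
Proof.
  intros Hg. apply is_lim_seq_spec. intros eps.
  destruct (INR_archimed eps (Rabs (al - ga))) as [N HN]. apply cond_pos.
  exists N. intros n Hn. apply le_INR in Hn.
  pose proof (cond_pos eps). pose proof (pos_INR n).
  replace ((al + INR n) / (ga + INR n) - 1) with ((al - ga) / (ga + INR n)) by (field; lra).
  unfold Rdiv. rewrite Rabs_mult, Rabs_inv, (Rabs_pos_eq (ga + INR n)) by lra.
  apply (Rmult_lt_reg_r (ga + INR n)). lra.
  rewrite Rmult_assoc, Rinv_l by lra. nra.
Qed.

Lemma hyp_ex (c : nat -> R) al be ga w :
  0 <= al -> 0 <= be -> 0 < ga -> 0 <= w < 1 ->
  (forall n, c (S n) = c n * ((al + INR n) / (ga + INR n)) * ((be + INR n) / (1 + INR n))) ->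
  ex_series (fun n => Rabs (c n * w ^ n)).
Proof.
  intros Ha Hb Hg Hw Hc.
  apply (ratio_ex _ (fun n => w * ((al + INR n) / (ga + INR n)) * ((be + INR n) / (1 + INR n))) w).
  - intros n. rewrite Hc. simpl pow.
    pose proof (pos_INR n).
    assert (0 <= (al + INR n) / (ga + INR n)) by (apply Rmult_le_pos; [lra| apply Rlt_le, Rinv_0_lt_compat; lra]).
    assert (0 <= (be + INR n) / (1 + INR n)) by (apply Rmult_le_pos; [lra| apply Rlt_le, Rinv_0_lt_compat; lra]).
    rewrite !Rabs_mult, (Rabs_pos_eq w), (Rabs_pos_eq ((al + INR n) / (ga + INR n))), (Rabs_pos_eq ((be + INR n) / (1 + INR n))) by lra.
    right. ring.
  - assert (H := is_lim_seq_mult' _ _ _ _ (is_lim_seq_mult' _ _ _ _ (is_lim_seq_const w) (lim_ratio al ga Hg)) (lim_ratio be 1 ltac:(lra))).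
    rewrite !Rmult_1_r in H. exact H.
  - lra.
Qed.

Lemma Series_ge_first (a : nat -> R) : ex_series a -> (forall n, 0 <= a n) -> a 0%nat <= Series a.
Proof.
  intros He Hp. rewrite Series_incr_1 by auto.
  assert (0 <= Series (fun k => a (S k))).
  { rewrite <- (Series_zero (fun _ => 0)) by auto.
    apply Series_le. intros n; split; [lra| apply Hp].
    apply (ex_series_incr_1 a). auto. }
  lra.
Qed.

Lemma ee_nonneg n : 0 <= ee n.
Proof. unfold ee. apply Rmult_le_pos. apply poch_nonneg; lra. apply Rlt_le, Rinv_0_lt_compat, fact_pos. Qed.

Lemma gg_nonneg a n : 0 <= a -> 0 <= gg a n.
Proof.
  intros Ha. unfold gg. pose proof (fact_pos n).
  assert (0 < poch (2*a+1/2) n) by (apply poch_pos; lra).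
  apply Rmult_le_pos. apply Rmult_le_pos; apply poch_nonneg; lra.
  apply Rlt_le, Rinv_0_lt_compat. nra.
Qed.

Lemma hh_nonneg a n : 0 <= a -> 0 <= hh a n.
Proof.
  intros Ha. unfold hh. pose proof (fact_pos n).
  assert (0 < poch (2*a+1/2) n) by (apply poch_pos; lra).
  apply Rmult_le_pos. apply Rmult_le_pos; apply poch_nonneg; lra.
  apply Rlt_le, Rinv_0_lt_compat. nra.
Qed.

Lemma ex_ee w : 0 <= w < 1 -> ex_series (fun n => ee n * w ^ n).
Proof.
  intros Hw. apply ex_series_Rabs. apply (hyp_ex ee (1/2) 1 1 w); try lra.
  intros n. rewrite ee_S. pose proof (pos_INR n). field. lra.
Qed.

Lemma ex_gg a w : 0 <= a -> 0 <= w < 1 -> ex_series (fun n => gg a n * w ^ n).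
Proof.
  intros Ha Hw. apply ex_series_Rabs. apply (hyp_ex (gg a) a a (2*a+1/2) w); try lra.
  intros n. rewrite gg_S by lra. pose proof (pos_INR n). field. lra.
Qed.

Lemma ex_hh a w : 0 <= a -> 0 <= w < 1 -> ex_series (fun n => hh a n * w ^ n).
Proof.
  intros Ha Hw. apply ex_series_Rabs. apply (hyp_ex (hh a) (a+1/2) (a+1/2) (2*a+1/2) w); try lra.
  intros n. rewrite hh_S by lra. pose proof (pos_INR n). field. lra.
Qed.

Lemma cauchy_pos (a b : nat -> R) w : 0 <= w -> (forall n, 0 <= a n) -> (forall n, 0 <= b n) ->
  ex_series (fun n => a n * w ^ n) -> ex_series (fun n => b n * w ^ n) ->
  Series (fun n => sum_f_R0 (fun k => a k * b (n - k)%nat) n * w ^ n) =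
  Series (fun n => a n * w ^ n) * Series (fun n => b n * w ^ n).
Proof.
  intros Hw Ha Hb Hea Heb. apply is_series_unique.
  eapply is_series_ext; [|apply (is_series_mult_pos _ _ _ _ (Series_correct _ Hea) (Series_correct _ Heb))].
  - intros n. simpl. rewrite Rmult_comm, scal_sum. apply sum_eq. intros i Hi.
    replace (w ^ n) with (w ^ i * w ^ (n - i)).
    ring. rewrite <- pow_add. f_equal. lia.
  - intros n. apply Rmult_le_pos; auto. apply pow_le; auto.
  - intros n. apply Rmult_le_pos; auto. apply pow_le; auto.
Qed.

Lemma E_sq w : 0 <= w < 1 -> Series (fun n => ee n * w ^ n) * Series (fun n => ee n * w ^ n) = / (1 - w).
Proof.
  intros Hw. rewrite <- cauchy_pos; try (apply ex_ee; auto); try apply ee_nonneg; try lra.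
  apply is_series_unique. eapply is_series_ext; [|apply is_series_geom; rewrite Rabs_pos_eq; lra].
  intros n. simpl. rewrite ee_coef. ring.
Qed.

Lemma E_ge1 w : 0 <= w < 1 -> 1 <= Series (fun n => ee n * w ^ n).
Proof.
  intros Hw. eapply Rle_trans; [|apply Series_ge_first].
  unfold ee; simpl; lra. apply ex_ee; auto.
  intros n. apply Rmult_le_pos. apply ee_nonneg. apply pow_le; lra.
Qed.

Lemma euler_fun a w : 0 <= a -> 0 <= w < 1 ->
  Series (fun n => ee n * w ^ n) * Series (fun n => gg a n * w ^ n) = Series (fun n => hh a n * w ^ n).
Proof.
  intros Ha Hw. rewrite <- cauchy_pos; try (apply ex_ee; auto); try (apply ex_gg; auto); try apply ee_nonneg; try lra.
  apply Series_ext. intros n. rewrite euler_coef by auto. reflexivity.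
  intros n; apply gg_nonneg; auto.
Qed.

Lemma Sk_small k x : 0 <= x < 1 -> Sk k x = Series (fun n => bs (INR k) n * (- x^2) ^ n).
Proof.
  intros Hx. unfold Sk, hyp2F1. destruct Rlt_dec as [_|H].
  - reflexivity.
  - exfalso. apply H. rewrite Rabs_Ropp, Rabs_pos_eq by nra. nra.
Qed.

Lemma Sk_big k x : 1 <= x -> Sk k x = / sqrt (1 + x^2) ^ k * Series (fun n => gg (INR k / 2) n * (x^2 / (1 + x^2)) ^ n).
Proof.
  intros Hx. unfold Sk, hyp2F1. destruct Rlt_dec as [H|_].
  - exfalso. rewrite Rabs_Ropp, Rabs_pos_eq in H by nra. nra.
  - f_equal.
    + replace (1 - - x^2) with (1 + x^2) by ring.
      rewrite Rpower_Ropp. f_equal.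
      replace (INR k / 2) with (/ 2 * INR k) by field.
      rewrite <- Rpower_mult, Rpower_sqrt by nra.
      apply Rpower_pow. apply sqrt_lt_R0. nra.
    + unfold hyp2F1_series. apply Series_ext. intros n. unfold gg.
      rewrite (poch_arg ((2 * INR k + 1) / 2 - (INR k + 1) / 2) (INR k / 2)) by field.
      rewrite (poch_arg ((2 * INR k + 1) / 2) (2 * (INR k / 2) + 1 / 2)) by field.
      f_equal. f_equal. field. nra.
Qed.

Lemma ex_bs_abs j x : 0 <= x < 1 -> ex_series (fun n => Rabs (bs (INR j) n * (- x^2) ^ n)).
Proof.
  intros Hx.
  apply (@ex_series_le R_AbsRing R_CompleteNormedModule _ (fun n => 3 ^ j * (x^2) ^ n)).
  - intros n. change (norm (Rabs (bs (INR j) n * (- x ^ 2) ^ n))) with (Rabs (Rabs (bs (INR j) n * (- x ^ 2) ^ n))).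
    rewrite Rabs_Rabsolu, Rabs_mult, <- RPow_abs, Rabs_Ropp, (Rabs_pos_eq (x^2)) by nra.
    rewrite Rabs_pos_eq by (apply bs_nonneg, pos_INR).
    apply Rmult_le_compat_r. apply pow_le; nra. apply bs_bound.
  - apply (ex_series_scal_l (3 ^ j) (fun n => (x^2) ^ n)). apply ex_series_geom. rewrite Rabs_pos_eq; nra.
Qed.

Lemma small_bound j x : 0 <= x < 1 -> Rabs (Sk j x) <= / (1 - x^2) * 3 ^ j.
Proof.
  intros Hx. rewrite Sk_small by auto.
  eapply Rle_trans. apply Series_Rabs. apply ex_bs_abs; auto.
  eapply Rle_trans. apply (Series_le _ (fun n => 3 ^ j * (x^2) ^ n)).
  - intros n. split. apply Rabs_pos.
    rewrite Rabs_mult, <- RPow_abs, Rabs_Ropp, (Rabs_pos_eq (x^2)) by nra.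
    rewrite Rabs_pos_eq by (apply bs_nonneg, pos_INR).
    apply Rmult_le_compat_r. apply pow_le; nra. apply bs_bound.
  - apply (ex_series_scal_l (3 ^ j) (fun n => (x^2) ^ n)). apply ex_series_geom. rewrite Rabs_pos_eq; nra.
  - rewrite (Series_scal_l (3 ^ j) (fun n => (x^2)^n)). rewrite (is_series_unique _ _ (is_series_geom (x^2) ltac:(rewrite Rabs_pos_eq; nra))).
    right. ring.
Qed.

Lemma small_S0 x : 0 <= x < 1 -> Sk 0 x = 1.
Proof.
  intros Hx. rewrite Sk_small by auto.
  rewrite Series_incr_1. 2:{ apply ex_series_Rabs, ex_bs_abs; auto. }
  rewrite Series_zero. unfold bs; simpl; field.
  intros n. unfold bs. rewrite poch_Sl. replace (INR 0 / 2) with 0 by (simpl; field).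
  unfold Rdiv. ring.
Qed.

Lemma small_rec k x : 0 < x < 1 -> (1 <= k)%nat ->
  x^2 * INR k ^ 2 * Sk (S k) x = (4 * INR k ^ 2 - 1) * (Sk (k - 1)%nat x - Sk k x).
Proof.
  intros Hx Hk. rewrite !Sk_small by lra.
  assert (HK : 1 <= INR k) by (apply (le_INR 1); lia).
  assert (Ex : forall j, ex_series (fun n => bs (INR j) n * (- x^2) ^ n)) by (intros j; apply ex_series_Rabs, ex_bs_abs; lra).
  set (A := fun n => bs (INR (k-1)) n * (- x^2) ^ n).
  set (B := fun n => bs (INR k) n * (- x^2) ^ n).
  set (c := 4 * INR k ^ 2 - 1).
  rewrite <- (Series_minus A B) by (unfold A, B; auto).
  rewrite <- (Series_scal_l c (fun n => A n - B n)).
  rewrite (Series_incr_1 (fun n => c * (A n - B n))).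
  2:{ apply (ex_series_scal_l c (fun n => A n - B n)).
      apply (ex_series_minus A B); unfold A, B; auto. }
  rewrite <- (Series_scal_l (x ^ 2 * INR k ^ 2)).
  unfold A, B, c.
  rewrite S_INR, minus_INR by lia. simpl INR.
  replace (bs (INR k - 1) 0 * (- x ^ 2) ^ 0 - bs (INR k) 0 * (- x ^ 2) ^ 0) with 0 by (unfold bs; simpl; field).
  rewrite Rmult_0_r, Rplus_0_l.
  apply Series_ext. intros n.
  assert (Hr := bs_rec (INR k) n HK).
  replace ((4 * INR k ^ 2 - 1) * (bs (INR k - 1) (S n) * (- x ^ 2) ^ S n - bs (INR k) (S n) * (- x ^ 2) ^ S n))
    with (((4 * INR k ^ 2 - 1) * (bs (INR k - 1) (S n) - bs (INR k) (S n))) * (- x ^ 2) ^ S n) by ring.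
  rewrite <- Hr, <- (tech_pow_Rmult (- x^2) n). set (P := (- x^2)^n). ring.
Qed.

Lemma big_series K w : 1 <= K -> 0 <= w < 1 ->
  (4 * K ^ 2 - 1) * (Series (fun n => hh ((K-1)/2) n * w ^ n) - Series (fun n => gg (K/2) n * w ^ n))
  = w * K ^ 2 * Series (fun n => hh ((K+1)/2) n * w ^ n).
Proof.
  intros HK Hw.
  set (A := fun n => hh ((K-1)/2) n * w ^ n).
  set (B := fun n => gg (K/2) n * w ^ n).
  set (c := 4 * K ^ 2 - 1).
  assert (EA : ex_series A) by (apply ex_hh; lra).
  assert (EB : ex_series B) by (apply ex_gg; lra).
  rewrite <- (Series_minus A B) by auto.
  rewrite <- (Series_scal_l c (fun n => A n - B n)).
  rewrite (Series_incr_1 (fun n => c * (A n - B n))).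
  2:{ apply (ex_series_scal_l c (fun n => A n - B n)). apply (ex_series_minus A B); auto. }
  rewrite <- (Series_scal_l (w * K ^ 2)).
  unfold A, B, c.
  replace (hh ((K - 1) / 2) 0 * w ^ 0 - gg (K / 2) 0 * w ^ 0) with 0 by (unfold hh, gg; simpl; field).
  rewrite Rmult_0_r, Rplus_0_l.
  apply Series_ext. intros n.
  assert (Hr := gh_rec K n HK).
  replace ((4 * K ^ 2 - 1) * (hh ((K - 1) / 2) (S n) * w ^ S n - gg (K / 2) (S n) * w ^ S n))
    with (((4 * K ^ 2 - 1) * (hh ((K - 1) / 2) (S n) - gg (K / 2) (S n))) * w ^ S n) by ring.
  rewrite Hr, <- (tech_pow_Rmult w n). set (P := w ^ n). ring.
Qed.

Section Big.
Variable x : R.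
Hypothesis Hx : 1 <= x.

Let w := x^2 / (1 + x^2).
Let rho := sqrt (1 + x^2).

Lemma w_range : 0 <= w < 1.
Proof.
  unfold w. split. apply Rmult_le_pos. nra. apply Rlt_le, Rinv_0_lt_compat. nra.
  apply (Rmult_lt_reg_r (1 + x^2)). nra. unfold Rdiv. rewrite Rmult_assoc, Rinv_l by nra. nra.
Qed.

Lemma rho_E : rho = Series (fun n => ee n * w ^ n).
Proof.
  unfold rho. apply sqrt_lem_1. nra.
  pose proof (E_ge1 w w_range). lra.
  rewrite E_sq by apply w_range. unfold w. field. nra.
Qed.

Lemma rho_pos : 1 <= rho.
Proof. rewrite rho_E. apply E_ge1, w_range. Qed.

Lemma euler_rho a : 0 <= a -> Series (fun n => gg a n * w ^ n) = Series (fun n => hh a n * w ^ n) / rho.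
Proof.
  intros Ha. rewrite <- euler_fun by (auto; apply w_range). rewrite <- rho_E.
  pose proof rho_pos. field. lra.
Qed.

Lemma Sk_big' k : Sk k x = / rho ^ k * Series (fun n => gg (INR k / 2) n * w ^ n).
Proof. apply Sk_big; auto. Qed.

Lemma big_pos k : 0 < Sk k x.
Proof.
  rewrite Sk_big'. apply Rmult_lt_0_compat.
  apply Rinv_0_lt_compat, pow_lt. pose proof rho_pos; lra.
  eapply Rlt_le_trans; [|apply Series_ge_first].
  unfold gg; simpl; lra.
  apply ex_gg. apply Rmult_le_pos; [apply pos_INR| lra]. apply w_range.
  intros n. apply Rmult_le_pos. apply gg_nonneg. apply Rmult_le_pos; [apply pos_INR| lra].
  apply pow_le, w_range.
Qed.

Lemma big_rec k : (1 <= k)%nat ->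
  x^2 * INR k ^ 2 * Sk (S k) x = (4 * INR k ^ 2 - 1) * (Sk (k - 1)%nat x - Sk k x).
Proof.
  intros Hk. destruct k as [|k']; [lia|].
  replace (S k' - 1)%nat with k' by lia.
  rewrite !Sk_big'.
  set (K := INR (S k')).
  assert (HK : 1 <= K) by (unfold K; rewrite S_INR; pose proof (pos_INR k'); lra).
  replace (INR (S (S k')) / 2) with ((K+1)/2) by (unfold K; rewrite !S_INR; field).
  replace (INR k' / 2) with ((K-1)/2) by (unfold K; rewrite !S_INR; field).
  fold K.
  rewrite (euler_rho ((K+1)/2)) by lra.
  rewrite (euler_rho ((K-1)/2)) by lra.
  pose proof (big_series K w HK w_range) as HS.
  pose proof rho_pos as Hr.
  assert (Hr2 : rho * rho = 1 + x^2) by (unfold rho; apply sqrt_sqrt; nra).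
  set (Hp := Series (fun n => hh ((K + 1) / 2) n * w ^ n)) in *.
  set (Hm := Series (fun n => hh ((K - 1) / 2) n * w ^ n)) in *.
  set (G0 := Series (fun n => gg (K / 2) n * w ^ n)) in *.
  assert (Hwx : x ^ 2 = w * (rho * rho)) by (rewrite Hr2; unfold w; field; nra).
  rewrite <- (tech_pow_Rmult rho (S k')), <- (tech_pow_Rmult rho k').
  assert (Hpk : 0 < rho ^ k') by (apply pow_lt; lra).
  set (R := rho ^ k') in *.
  transitivity ((4 * K ^ 2 - 1) * (Hm - G0) / (rho * R)).
  - rewrite HS, Hwx. field. lra.
  - field. lra.
Qed.

End Big.

Theorem lemma2 : forall x : R, 0 <= x ->
  exists l : R,
    is_lim_seq (fun k : nat => x * Sk (S k) x / Sk k x) (Finite l) /\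
    0 <= l <= 2.
Proof.
  intros x Hx. destruct (Req_dec x 0) as [Hx0|Hx0].
  - subst x. exists 0. split; [|lra].
    eapply is_lim_seq_ext; [|apply is_lim_seq_const]. intros n. unfold Rdiv. ring.
  - assert (Hxp : 0 < x) by lra.
    exists (2 * x / (1 + sqrt (1 + x^2))). split.
    + apply (limit_lemma x (fun k => Sk k x)); auto.
      * destruct (Rlt_le_dec x 1) as [Hl|Hg].
        -- apply (pos_lemma x (/ (1 - x^2)) (fun k => Sk k x)).
           ++ lra.
           ++ apply Rinv_0_lt_compat. nra.
           ++ rewrite small_S0 by lra. lra.
           ++ intros k Hk. apply small_rec; [lra|exact Hk].
           ++ intros k. apply small_bound. lra.
        -- intros k. apply big_pos; auto.
      * intros k Hk. destruct (Rlt_le_dec x 1) as [Hl|Hg].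
        -- apply small_rec; [lra|exact Hk].
        -- apply big_rec; auto.
    + assert (Hs : x <= sqrt (1 + x^2)).
      { rewrite <- (sqrt_pow2 x) at 1 by lra. apply sqrt_le_1_alt. nra. }
      assert (Hs0 : 0 <= sqrt (1 + x^2)) by apply sqrt_pos.
      split.
      * apply Rmult_le_pos. lra. apply Rlt_le, Rinv_0_lt_compat. lra.
      * apply (Rmult_le_reg_r (1 + sqrt (1 + x^2))). lra.
        unfold Rdiv. rewrite Rmult_assoc, Rinv_l by lra. lra.
Qed.
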